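(* Let $\Lambda_1,\Lambda_2\subset\mathbb{R}^d$ be almost-orthogonal planes, and let $v$ be a vector whose angle with each of $\Lambda_1$ and $\Lambda_2$ is at most $\alpha$, for some $0<\alpha\le\frac13$. Then the angle between $v$ and $\Lambda_1\cap\Lambda_2$ is at most $10\alpha$.
   Context: Planes are affine subspaces. The angle between a vector $v$ and a plane $\Lambda$ is the infimum of the angles between $v$ and vectors $w\in\Lambda-\Lambda$. Two planes $\Lambda_1,\Lambda_2\subset\mathbb{R}^d$ are almost-orthogonal if there is a basis $\{v_1,\dots,v_d\}$ of $\mathbb{R}^d$ and integers $0\le a\le b\le c\le d$ such that $v_1,\dots,v_b$ form an orthonormal basis of (the direction space of) $\Lambda_1$, $v_{a+1},\dots,v_c$ form an orthonormal basis of (the direction space of) $\Lambda_2$, every vector in the span of $\{v_1,\dots,v_a\}$ makes an angle in $[\pi/2-0.01,\pi/2+0.01]$ with $\Lambda_2$, and every vector in the span of $\{v_{b+1},\dots,v_d\}$ makes an angle in $[\pi/2-0.01,\pi/2+0.01]$ with $\Lambda_1$. *)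

(* Defs.v *)
From HB Require Import structures.
From mathcomp Require Import all_boot all_order all_algebra.
From mathcomp Require Import all_classical all_reals all_analysis.
Set Implicit Arguments. Unset Strict Implicit. Unset Printing Implicit Defensive.
Import Order.TTheory GRing.Theory Num.Theory.
Local Open Scope classical_set_scope.
Local Open Scope ring_scope.

Section Defs.
Context {R : realType} {d : nat}.

Definition dotv (v w : 'rV[R]_d) : R := (v *m w^T) 0 0.
Definition normv (v : 'rV[R]_d) : R := Num.sqrt (dotv v v).

Definition vangle (v w : 'rV[R]_d) : R := acos (dotv v w / (normv v * normv w)).

(* a plane = affine subspace: p + (row space of V) *)
Definition is_plane (L : set 'rV[R]_d) : Prop :=
  exists (p : 'rV[R]_d) (V : 'M[R]_d), L = [set x | (x - p <= V)%MS].

(* difference set L - L (the direction space of a plane) *)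
Definition diffset (L : set 'rV[R]_d) : set 'rV[R]_d :=
  [set z | exists x y, L x /\ L y /\ z = x - y].

(* angle between v and a plane L: infimum of angles between v and nonzero
   w in L - L; by convention pi/2 when L - L has no nonzero vector. *)
Definition angle_plane (v : 'rV[R]_d) (L : set 'rV[R]_d) : R :=
  let D := [set w | diffset L w /\ w != 0] in
  if `[< D !=set0 >] then inf [set vangle v w | w in D] else pi / 2.

Definition span_rows (B : 'M[R]_d) (P : pred 'I_d) : set 'rV[R]_d :=
  [set x | exists c : 'rV[R]_d, (forall i, ~~ P i -> c 0 i = 0) /\ x = c *m B].

Definition orthonormal_rows (B : 'M[R]_d) (P : pred 'I_d) : Prop :=
  forall i j, P i -> P j -> dotv (row i B) (row j B) = (i == j)%:R.

Definition onb_dir (B : 'M[R]_d) (P : pred 'I_d) (L : set 'rV[R]_d) : Prop :=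
  orthonormal_rows B P /\ span_rows B P = diffset L.

Definition almost_orthogonal (L1 L2 : set 'rV[R]_d) : Prop :=
  exists (B : 'M[R]_d) (a b c : nat),
    [/\ row_free B, (a <= b <= c)%N && (c <= d)%N,
        onb_dir B (fun i : 'I_d => (i < b)%N) L1,
        onb_dir B (fun i : 'I_d => (a <= i < c)%N) L2 &
        (forall u, span_rows B (fun i : 'I_d => (i < a)%N) u -> u != 0 ->
           pi / 2 - 100^-1 <= angle_plane u L2 <= pi / 2 + 100^-1) /\
        (forall u, span_rows B (fun i : 'I_d => (b <= i)%N) u -> u != 0 ->
           pi / 2 - 100^-1 <= angle_plane u L1 <= pi / 2 + 100^-1)].

End Defs.

(* Main.v *)
Require Import Defs.
From HB Require Import structures.
From mathcomp Require Import all_boot all_order all_algebra.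
From mathcomp Require Import all_classical all_reals all_analysis.
From mathcomp Require Import ring lra.
Import Order.TTheory GRing.Theory Num.Theory.
Import numFieldNormedType.Exports.
Local Open Scope classical_set_scope.
Local Open Scope ring_scope.



Section Dot.
Context {R : realType} {d : nat}.
Implicit Types u v w : 'rV[R]_d.

Lemma dotvE u w : dotv u w = \sum_i u 0 i * w 0 i.
Proof. by rewrite /dotv !mxE; apply: eq_bigr => i _; rewrite mxE. Qed.

Lemma dotvC u w : dotv u w = dotv w u.
Proof. by rewrite !dotvE; apply: eq_bigr => i _; rewrite mulrC. Qed.

Lemma dotvDl u v w : dotv (u + v) w = dotv u w + dotv v w.
Proof. by rewrite !dotvE -big_split; apply: eq_bigr => i _; rewrite mxE mulrDl. Qed.

Lemma dotvZl a u w : dotv (a *: u) w = a * dotv u w.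
Proof. by rewrite !dotvE mulr_sumr; apply: eq_bigr => i _; rewrite mxE mulrA. Qed.

Lemma dotvNl u w : dotv (- u) w = - dotv u w.
Proof. by rewrite -scaleN1r dotvZl mulN1r. Qed.

Lemma dotvBl u v w : dotv (u - v) w = dotv u w - dotv v w.
Proof. by rewrite dotvDl dotvNl. Qed.

Lemma dotvDr u v w : dotv w (u + v) = dotv w u + dotv w v.
Proof. by rewrite dotvC dotvDl !(dotvC w). Qed.

Lemma dotvZr a u w : dotv w (a *: u) = a * dotv w u.
Proof. by rewrite dotvC dotvZl dotvC. Qed.

Lemma dotvNr u w : dotv w (- u) = - dotv w u.
Proof. by rewrite dotvC dotvNl dotvC. Qed.

Lemma dotvBr u v w : dotv w (u - v) = dotv w u - dotv w v.
Proof. by rewrite dotvDr dotvNr. Qed.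

Lemma dotv0l w : dotv 0 w = 0.
Proof. by rewrite dotvE big1 // => i _; rewrite mxE mul0r. Qed.

Lemma dotv0r w : dotv w 0 = 0.
Proof. by rewrite dotvC dotv0l. Qed.

Lemma dotv_suml (I : finType) (F : I -> 'rV[R]_d) w :
  dotv (\sum_i F i) w = \sum_i dotv (F i) w.
Proof.
by apply: (big_morph (fun x => dotv x w)) => [x y|]; rewrite ?dotvDl ?dotv0l.
Qed.

Lemma dotvv_ge0 u : 0 <= dotv u u.
Proof. by rewrite dotvE sumr_ge0 // => i _; rewrite -expr2 sqr_ge0. Qed.

Lemma dotvv_eq0 u : (dotv u u == 0) = (u == 0).
Proof.
apply/idP/idP; last by move/eqP->; rewrite dotv0l.
rewrite dotvE psumr_eq0 => [/allP H|i _]; last by rewrite -expr2 sqr_ge0.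
apply/eqP/rowP => i; rewrite mxE.
have := H i (mem_index_enum _); rewrite -expr2 sqrf_eq0 => /eqP //.
Qed.

Lemma normv_ge0 u : 0 <= normv u.
Proof. exact: sqrtr_ge0. Qed.

Lemma normv_sq u : normv u ^+ 2 = dotv u u.
Proof. by rewrite sqr_sqrtr // dotvv_ge0. Qed.

Lemma normv_gt0 u : u != 0 -> 0 < normv u.
Proof.
move=> u0; rewrite lt_neqAle normv_ge0 andbT eq_sym.
apply/negP => /eqP h; move: (normv_sq u); rewrite h expr0n /= => /esym/eqP.
by rewrite dotvv_eq0 (negbTE u0).
Qed.

Lemma CS2 u w : dotv u w ^+ 2 <= dotv u u * dotv w w.
Proof.
have [w0|w0] := eqVneq w 0; first by rewrite w0 dotv0r dotv0r expr0n /= mulr0.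
have pw : 0 < dotv w w by rewrite lt_neqAle eq_sym dotvv_eq0 w0 dotvv_ge0.
set t := dotv u w / dotv w w.
have := dotvv_ge0 (u - t *: w).
rewrite !dotvBl !dotvBr !dotvZl !dotvZr (dotvC w u).
rewrite /t => h.
have e : dotv u u - dotv u w / dotv w w * dotv u w -
   (dotv u w / dotv w w * dotv u w - dotv u w / dotv w w * (dotv u w / dotv w w * dotv w w))
   = dotv u u - dotv u w ^+ 2 / dotv w w.
  by field; rewrite gt_eqF.
rewrite e subr_ge0 ler_pdivrMr // in h.
Qed.

Lemma CS u w : `|dotv u w| <= normv u * normv w.
Proof.
rewrite -(@ler_pXn2r _ 2) //= ?nnegrE ?mulr_ge0 ?normv_ge0 //.
by rewrite exprMn !normv_sq real_normK ?num_real // CS2.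
Qed.

Lemma CS1 u w : dotv u w <= normv u * normv w.
Proof. exact: le_trans (ler_norm _) (CS u w). Qed.

Lemma CSN u w : - dotv u w <= normv u * normv w.
Proof. by apply: le_trans (CS u w); rewrite -normrN ler_norm. Qed.

Lemma normvD u w : normv (u + w) <= normv u + normv w.
Proof.
rewrite -(@ler_pXn2r _ 2) //= ?nnegrE ?addr_ge0 ?normv_ge0 //.
rewrite normv_sq dotvDl !dotvDr (dotvC w u) sqrrD !normv_sq.
have := CS1 u w; lra.
Qed.

Lemma cos_arg_bound u w : -1 <= dotv u w / (normv u * normv w) <= 1.
Proof.
have [u0|u0] := eqVneq u 0; first by rewrite u0 dotv0l mul0r; lra.
have [w0|w0] := eqVneq w 0; first by rewrite w0 dotv0r mul0r; lra.
have p : 0 < normv u * normv w by rewrite mulr_gt0 // normv_gt0.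
rewrite ler_pdivlMr // ler_pdivrMr // mul1r mulN1r.
have := CS1 u w; have := CSN u w; lra.
Qed.

Lemma vangle_ge0 u w : 0 <= vangle u w.
Proof. exact: acos_ge0 (cos_arg_bound u w). Qed.

Lemma vangle_lepi u w : vangle u w <= pi.
Proof. exact: acos_lepi (cos_arg_bound u w). Qed.

Lemma cos_vangle u w : cos (vangle u w) = dotv u w / (normv u * normv w).
Proof. by rewrite /vangle acosK // in_itv /= cos_arg_bound. Qed.

End Dot.



Section Trig.
Context {R : realType}.

Lemma sin_le_x (x : R) : 0 <= x -> sin x <= x.
Proof.
move=> x0.
have [c _ h] : exists2 c, c \in `[0, x] & sin x - sin 0 = cos c * (x - 0).
  apply: (@MVT_segment R sin cos 0 x x0).
  apply: continuous_subspaceT => z; exact: continuous_sin.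
move: h; rewrite sin0 subr0 subr0 => ->.
by rewrite ler_piMl // cos_le1.
Qed.

Lemma in0pi {x : R} : 0 <= x -> x <= pi -> x \in `[0, pi].
Proof. by move=> a b; rewrite in_itv /= a b. Qed.

Lemma acos_in {y : R} : -1 <= y <= 1 -> acos y \in `[0, pi].
Proof. by move=> h; rewrite in0pi ?acos_ge0 ?acos_lepi. Qed.

Lemma acos_lt_cos (y t : R) : -1 <= y <= 1 -> 0 <= t -> t <= pi ->
  acos y < t -> cos t < y.
Proof.
move=> hy t0 tpi h.
by rewrite -[X in _ < X](acosK (x:=y)) ?in_itv //= ltr_cos ?acos_in ?in0pi.
Qed.

Lemma acos_ge_cos (y t : R) : -1 <= y <= 1 -> 0 <= t -> t <= pi ->
  t <= acos y -> y <= cos t.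
Proof.
move=> hy t0 tpi h; rewrite leNgt; apply/negP => hlt.
have : acos y < t.
  by rewrite -(ltr_cos (acos_in hy) (in0pi t0 tpi)) acosK ?in_itv.
by rewrite ltNge h.
Qed.

Lemma acos_le_of_cos (y t : R) : -1 <= y <= 1 -> 0 <= t -> t <= pi ->
  cos t <= y -> acos y <= t.
Proof.
move=> hy t0 tpi h; rewrite leNgt; apply/negP => hlt.
have : cos (acos y) < cos t by rewrite ltr_cos ?acos_in ?in0pi.
by rewrite acosK ?in_itv // ltNge h.
Qed.

End Trig.



Section Geo.
Context {R : realType} {d : nat}.
Implicit Types u v w : 'rV[R]_d.

Lemma dotv_sumr (I : finType) (F : I -> 'rV[R]_d) w :
  dotv w (\sum_i F i) = \sum_i dotv w (F i).
Proof.
rewrite dotvC dotv_suml; apply: eq_bigr => i _; exact: dotvC.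
Qed.

Lemma ortho_disj (B : 'M[R]_d) (P : pred 'I_d) (c c' : 'rV[R]_d) :
  orthonormal_rows B P ->
  (forall i, c 0 i != 0 -> P i) -> (forall i, c' 0 i != 0 -> P i) ->
  (forall i, c 0 i * c' 0 i = 0) -> dotv (c *m B) (c' *m B) = 0.
Proof.
move=> hB hc hc' hcc.
rewrite (mulmx_sum_row c) dotv_suml big1 // => i _.
rewrite dotvZl.
have [ci|ci] := eqVneq (c 0 i) 0; first by rewrite ci mul0r.
rewrite (mulmx_sum_row c') dotv_sumr big1 ?mulr0 // => j _.
rewrite dotvZr.
have [cj|cj] := eqVneq (c' 0 j) 0; first by rewrite cj mul0r.
rewrite hB; [|exact: hc|exact: hc'].
have [ij|ij] := eqVneq i j; last by rewrite mulr0.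
subst j; rewrite ?eqxx ?mulr1.
by move: (hcc i) => /eqP; rewrite mulf_eq0 (negbTE ci) (negbTE cj).
Qed.

Definition maskv (c : 'rV[R]_d) (Q : pred 'I_d) : 'rV[R]_d :=
  \row_j (if Q j then c 0 j else 0).

Lemma maskvE c Q i : maskv c Q 0 i = if Q i then c 0 i else 0.
Proof. by rewrite mxE. Qed.

Lemma maskv_split c Q : c = maskv c Q + maskv c (predC Q).
Proof. by apply/rowP => i; rewrite !mxE /=; case: (Q i); rewrite /= ?addr0 ?add0r. Qed.

Lemma maskv_supp c Q i : maskv c Q 0 i != 0 -> Q i && (c 0 i != 0).
Proof. by rewrite maskvE; case: (Q i) => //; rewrite eqxx. Qed.

Lemma diffsetN (L : set 'rV[R]_d) z : diffset L z -> diffset L (- z).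
Proof. by move=> [x [y [Lx [Ly ->]]]]; exists y, x; split => //; split => //; rewrite opprB. Qed.

Lemma plane_add (L : set 'rV[R]_d) x z : is_plane L -> L x -> diffset L z -> L (x + z).
Proof.
move=> [p [V ->]] /= Lx [y1 [y2 [/= L1 [/= L2 ->]]]].
have -> : x + (y1 - y2) - p = (x - p) + (y1 - p) - (y2 - p).
  by rewrite opprB !addrA subrK [x - p + y1]addrAC [RHS]addrAC.
by apply: addmx_sub; [apply: addmx_sub | rewrite (eqmx_opp (y2 - p))].
Qed.

Lemma diffset_cap (L1 L2 : set 'rV[R]_d) q z : is_plane L1 -> is_plane L2 ->
  (L1 `&` L2) q -> diffset L1 z -> diffset L2 z -> diffset (L1 `&` L2) z.
Proof.
move=> P1 P2 [q1 q2] z1 z2; exists (q + z), q; split; last split => //.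
  by split; apply: plane_add.
by rewrite addrC addKr.
Qed.

Lemma vangle_lb u (L : set 'rV[R]_d) :
  has_lbound [set vangle u w | w in [set w | diffset L w /\ w != 0]].
Proof. by exists 0 => _ [w _ <-]; exact: vangle_ge0. Qed.

Lemma ap_le u (L : set 'rV[R]_d) w : diffset L w -> w != 0 ->
  angle_plane u L <= vangle u w.
Proof.
move=> Lw w0; rewrite /angle_plane.
have ne : [set w | diffset L w /\ w != 0] !=set0 by exists w.
rewrite (asboolT ne).
by apply: ge_inf; [exact: vangle_lb | exists w].
Qed.

Lemma ap_lt u (L : set 'rV[R]_d) t : angle_plane u L < t -> t <= pi / 2 ->
  exists w, [/\ diffset L w, w != 0 & vangle u w < t].
Proof.
rewrite /angle_plane; case: asboolP => [ne|ne]; last by move=> h1 h2; have := lt_le_trans h1 h2; rewrite ltxx.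
have ne' : [set vangle u w | w in [set w | diffset L w /\ w != 0]] !=set0.
  by case: ne => w hw; exists (vangle u w), w.
move=> /(inf_lt ne') [_ [w [Lw w0] <-]] h _.
by exists w.
Qed.

Lemma vangle_N u w : w != 0 -> vangle u w <= pi / 2 \/ vangle u (- w) <= pi / 2.
Proof.
move=> w0.
have h : forall z, 0 <= dotv u z / (normv u * normv z) -> vangle u z <= pi / 2.
  move=> z hz; apply: acos_le_of_cos; rewrite ?cos_arg_bound //.
  - by rewrite divr_ge0 // pi_ge0.
  - by rewrite ler_pdivrMr // ler_pMr ?pi_gt0 // ler1n.
  - by rewrite cos_pihalf.
have e : normv (- w) = normv w by rewrite /normv dotvNl dotvNr opprK.
have [hp|hn] := lerP 0 (dotv u w / (normv u * normv w)).
  by left; apply: h.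
right; apply: h; rewrite e dotvNr mulNr oppr_ge0 ltW //.
Qed.

Lemma ap_le_pihalf u (L : set 'rV[R]_d) : angle_plane u L <= pi / 2.
Proof.
have [[w [Lw w0]]|ne] := pselect ([set w | diffset L w /\ w != 0] !=set0).
  have w0' : - w != 0 by rewrite oppr_eq0.
  case: (vangle_N u w w0) => h.
    exact: le_trans (ap_le u _ _ Lw w0) h.
  exact: le_trans (ap_le u _ _ (diffsetN _ _ Lw) w0') h.
by rewrite /angle_plane; case: asboolP.
Qed.
End Geo.



Section Proj.
Context {R : realType} {d : nat}.
Implicit Types u v w : 'rV[R]_d.

Lemma le_sq_norm (x y : R) : 0 <= x -> 0 <= y -> x ^+ 2 <= y ^+ 2 -> x <= y.
Proof. by move=> x0 y0; rewrite ler_pXn2r // nnegrE. Qed.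

Lemma proj_bound v w (th : R) : v != 0 -> w != 0 -> 0 <= th -> th <= pi / 2 ->
  vangle v w < th -> exists t, normv (v - t *: w) <= sin th * normv v.
Proof.
move=> v0 w0 th0 thpi h.
have nv := normv_gt0 v v0; have nw := normv_gt0 w w0.
have thpi' : th <= pi by apply: le_trans thpi _; rewrite ler_pdivrMr // ler_pMr ?pi_gt0 // ler1n.
set x := dotv v w / (normv v * normv w).
have hx : cos th < x by apply: acos_lt_cos; rewrite ?cos_arg_bound.
have c0 : 0 <= cos th by apply: cos_ge0_pihalf; rewrite thpi andbT (le_trans _ th0) // oppr_le0 divr_ge0 // pi_ge0.
have s0 : 0 <= sin th by apply: sin_ge0_pi; rewrite th0.
have dvw : dotv v w = x * (normv v * normv w) by rewrite /x mulfVK // mulf_neq0 // gt_eqF.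
exists (dotv v w / dotv w w).
apply: le_sq_norm; rewrite ?mulr_ge0 ?normv_ge0 //.
rewrite normv_sq dotvBl !dotvBr !dotvZl !dotvZr (dotvC w v) -!normv_sq dvw exprMn.
have e : normv v ^+ 2 - x * (normv v * normv w) / normv w ^+ 2 * (x * (normv v * normv w)) -
  (x * (normv v * normv w) / normv w ^+ 2 * (x * (normv v * normv w)) -
   x * (normv v * normv w) / normv w ^+ 2 * (x * (normv v * normv w) / normv w ^+ 2 * normv w ^+ 2))
  = normv v ^+ 2 * (1 - x ^+ 2) by field; rewrite gt_eqF.
rewrite e sin2cos2 mulrC ler_pM2r ?exprn_gt0 //.
rewrite lerD2l lerN2 ler_pXn2r ?nnegrE //; first exact: ltW.
exact: le_trans (ltW hx).
Qed.

Lemma gram_id (x y : 'rV[R]_d) : dotv (x + y) (x + y) * dotv x x - dotv (x + y) x ^+ 2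
  = dotv x x * dotv y y - dotv x y ^+ 2.
Proof. rewrite !dotvDl !dotvDr (dotvC y x); ring. Qed.
End Proj.



Section Fin.
Context {R : realType}.

Lemma cos8 (th : R) :
  cos (((th *+ 2) *+ 2) *+ 2) = 2 * (2 * (1 - 2 * sin th ^+ 2) ^+ 2 - 1) ^+ 2 - 1.
Proof.
rewrite !cos_mulr2n cos2sin2 !mulr2n; ring.
Qed.

Lemma cos8_bound (th : R) : 0 <= th -> th <= 1/4 ->
  cos (((th *+ 2) *+ 2) *+ 2) <= 1 - (31/10) ^+ 2 * sin th ^+ 2.
Proof.
move=> t0 t1.
have s0 : 0 <= sin th ^+ 2 by rewrite sqr_ge0.
have s1 : sin th ^+ 2 <= 1/16.
  have h1 : sin th <= th by apply: sin_le_x.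
  have h0 : 0 <= sin th.
    apply: sin_ge0_pi; rewrite t0 /= (le_trans t1) //.
    by apply: le_trans (pi_ge2 _); lra.
  nra.
rewrite cos8; set S := sin th ^+ 2 in s0 s1 *.
set X := 2 * (1 - 2 * S) ^+ 2 - 1.
have hX : X = 1 - 8 * S + 8 * S ^+ 2 by rewrite /X; ring.
have X0 : 0 <= X by rewrite hX; nra.
have X1 : 1 - X >= 7 * S by rewrite hX; nra.
nra.
Qed.

Lemma absb (y P : R) : y <= 100^-1 * P -> - y <= 100^-1 * P -> `|y| <= P / 100.
Proof. by move=> h1 h2; rewrite ler_norml; apply/andP; split; lra. Qed.

Lemma sq_bound (AA AC a1 a2 nX nY n1 n2 : R) : 0 <= nX ->
  AA + a1 = AC + a2 -> nX ^+ 2 = AA -> `|AC| <= nX * nY / 100 ->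
  `|a1| <= nX * n1 -> `|a2| <= nX * n2 -> nX ^+ 2 <= nX * (nY / 100 + (n1 + n2)).
Proof.
move=> X0 e sq; rewrite !ler_norml.
case/andP => o1 o2; case/andP => p1 p2; case/andP => q1 q2.
rewrite sq !mulrDr; lra.
Qed.

Lemma lin_bound (nA nC r : R) : 0 <= nA -> 0 <= nC -> 0 <= r ->
  nA ^+ 2 <= nA * (nC / 100 + r) -> nC ^+ 2 <= nC * (nA / 100 + r) ->
  nA <= 102/100 * r.
Proof.
move=> A0 C0 r0 hA hC.
have lA : nA <= nC / 100 + r by nra.
have lC : nC <= nA / 100 + r by nra.
lra.
Qed.

Lemma nu_bound (nA n1 n2 s nv : R) : 0 <= n1 -> nA <= 102/100 * (n1 + n2) ->
  n1 <= s * nv -> n2 <= s * nv -> n1 + nA <= 31/10 * s * nv.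
Proof. lra. Qed.

Lemma th_facts (alpha : R) : 0 < alpha -> 10 * alpha < pi / 2 ->
  let th := alpha * (6/5) in
  [/\ 0 <= th, th <= pi / 2, th <= 1/4, alpha < th &
    [/\ 0 <= th *+ 2 *+ 2 *+ 2, th *+ 2 *+ 2 *+ 2 <= pi & th *+ 2 *+ 2 *+ 2 <= 10 * alpha]].
Proof.
move=> a0 small th.
have pi4 : pi < 4 :> R by have := @pihalf_lt2 R; lra.
rewrite -!mulrnA /th; split; try lra; split; lra.
Qed.

Lemma pihalf_facts : 0 <= pi / 2 - 100^-1 :> R /\ pi / 2 - 100^-1 <= pi :> R.
Proof. have := @pi_ge2 R; split; lra. Qed.

Lemma T_lt1 (s th : R) : 0 <= s -> s <= th -> th <= 1/4 -> 31/10 * s < 1.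
Proof. lra. Qed.

Lemma not_small (nv T : R) : 0 < nv -> T < 1 -> nv <= T * nv -> False.
Proof. move=> h1 h2 h3; nra. Qed.

Lemma Dpos (nv nu T dvu : R) : 0 < nv -> 0 <= T -> T < 1 -> nu <= T * nv ->
  dvu <= nv * nu -> 0 < nv ^+ 2 - dvu.
Proof.
move=> h1 h2 h3 h4 h5.
have q1 : nv * nu <= nv * (T * nv) by rewrite ler_wpM2l // ltW.
have q2 : T * nv ^+ 2 < nv ^+ 2 by rewrite gtr_pMl // exprn_gt0.
move: q1 q2; rewrite expr2; lra.
Qed.

Lemma gram_bound (nv nm nu D dmu T : R) : 0 <= nv -> 0 <= nu -> 0 <= T ->
  nv ^+ 2 * nm ^+ 2 - D ^+ 2 = nm ^+ 2 * nu ^+ 2 - dmu ^+ 2 ->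
  nu <= T * nv -> (1 - T ^+ 2) * (nv * nm) ^+ 2 <= D ^+ 2.
Proof.
move=> h0 h1 h2 g hu.
have hu2 : nu ^+ 2 <= (T * nv) ^+ 2 by rewrite ler_pXn2r ?nnegrE ?mulr_ge0.
have hg1 : nm ^+ 2 * nu ^+ 2 <= nm ^+ 2 * (T * nv) ^+ 2 by rewrite ler_wpM2l // sqr_ge0.
have hg2 := sqr_ge0 dmu.
have e1 : (1 - T ^+ 2) * (nv * nm) ^+ 2 = nv ^+ 2 * nm ^+ 2 - nm ^+ 2 * (T * nv) ^+ 2 by ring.
rewrite e1; lra.
Qed.

Lemma key_bound (D P T : R) : 0 < P -> 0 < D -> D <= P ->
  (1 - T ^+ 2) * P ^+ 2 <= D ^+ 2 -> (1 - T ^+ 2) <= D / P.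
Proof.
move=> pp Dp DP h3.
have h4 : D ^+ 2 <= D * P by rewrite expr2 ler_wpM2l // ltW.
rewrite ler_pdivlMr // -(ler_pM2r pp); apply: le_trans h4; apply: le_trans h3.
by rewrite -mulrA -expr2.
Qed.

Lemma final_cmp (c8 T s : R) : c8 <= 1 - (31/10) ^+ 2 * s ^+ 2 -> T = 31/10 * s ->
  c8 <= 1 - T ^+ 2.
Proof. by move=> h ->; rewrite exprMn. Qed.

End Fin.



Theorem lemma5 (R : realType) (d : nat) (L1 L2 : set 'rV[R]_d)
    (v : 'rV[R]_d) (alpha : R) :
  is_plane L1 -> is_plane L2 -> L1 `&` L2 !=set0 ->
  almost_orthogonal L1 L2 ->
  v != 0 -> 0 < alpha -> alpha <= 3^-1 ->
  angle_plane v L1 <= alpha -> angle_plane v L2 <= alpha ->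
  angle_plane v (L1 `&` L2) <= 10 * alpha.
Proof.
move=> P1 P2 [q Hq] [B [a [b [c [Bfree /andP[/andP[ab bc] cd] [on1 sp1] [on2 sp2] [ao1 ao2]]]]]].
move=> v0 a0 a3 h1 h2.
have [big|small] := lerP (pi / 2) (10 * alpha).
  exact: le_trans (ap_le_pihalf _ _) big.
have [th0 thpi thq ath [t80 t8pi t8a]] := th_facts _ a0 small.
set th := alpha * (6/5) in th0 thpi thq ath t80 t8pi t8a.
have [w1 [Lw1 w10 hw1]] : exists w, [/\ diffset L1 w, w != 0 & vangle v w < th].
  by apply: ap_lt => //; apply: le_lt_trans h1 ath.
have [w2 [Lw2 w20 hw2]] : exists w, [/\ diffset L2 w, w != 0 & vangle v w < th].
  by apply: ap_lt => //; apply: le_lt_trans h2 ath.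
have [t1 ht1] := proj_bound v w1 th v0 w10 th0 thpi hw1.
have [t2 ht2] := proj_bound v w2 th v0 w20 th0 thpi hw2.
have nv := normv_gt0 v v0.
move: Lw1 ht1; rewrite -sp1 => -[c1' [sc1 ->]].
move: Lw2 ht2; rewrite -sp2 => -[c2' [sc2 ->]].
rewrite !scalemxAl.
set c1 := t1 *: c1'; set c2 := t2 *: c2'.
move=> ht2 ht1.
have s1 : forall i, c1 0 i != 0 -> (i < b)%N.
  move=> i; rewrite mxE; apply: contraR => /sc1 ->; by rewrite mulr0.
have s2 : forall i, c2 0 i != 0 -> (a <= i < c)%N.
  move=> i; rewrite mxE; apply: contraR => /sc2 ->; by rewrite mulr0.
set QA : pred 'I_d := fun i => (i < a)%N.
set QB : pred 'I_d := fun i => (i < b)%N.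
set A := maskv c1 QA *m B; set m1 := maskv c1 (predC QA) *m B.
set m2 := maskv c2 QB *m B; set C := maskv c2 (predC QB) *m B.
have eA : c1 *m B = A + m1 by rewrite /A /m1 -mulmxDl -maskv_split.
have eC : c2 *m B = m2 + C by rewrite /C /m2 -mulmxDl -maskv_split.
have prod0 : forall (cc : 'rV[R]_d) Q i, maskv cc Q 0 i * maskv cc (predC Q) 0 i = 0.
  by move=> cc Q i; rewrite !maskvE /=; case: (Q i); rewrite ?mulr0 ?mul0r.
have oAm1 : dotv A m1 = 0.
  apply: (@ortho_disj _ _ B _ _ _ on1) => // i.
  - by move/maskv_supp => /andP[_ /s1].
  - by move/maskv_supp => /andP[_ /s1].
have oAm2 : dotv A m2 = 0.
  apply: (@ortho_disj _ _ B _ _ _ on1) => // i.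
  - by move/maskv_supp => /andP[_ /s1].
  - by move/maskv_supp => /andP[].
  - have [z|nz] := eqVneq (maskv c1 QA 0 i) 0; first by rewrite z mul0r.
    have [z'|nz'] := eqVneq (maskv c2 QB 0 i) 0; first by rewrite z' mulr0.
    move/maskv_supp: nz => /andP[ia _]; move/maskv_supp: nz' => /andP[_ /s2 /andP[ai _]].
    by move: ia; rewrite /QA /= ltnNge ai.
have oCm1 : dotv C m1 = 0.
  apply: (@ortho_disj _ _ B _ _ _ on2) => // i.
  - move/maskv_supp => /andP[ib /s2] //.
  - move/maskv_supp => /andP[ia /s1 ib]; rewrite /QA /= -leqNgt in ia.
    by rewrite ia /= (leq_trans ib bc).
  - have [z|nz] := eqVneq (maskv c2 (predC QB) 0 i) 0; first by rewrite z mul0r.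
    have [z'|nz'] := eqVneq (maskv c1 (predC QA) 0 i) 0; first by rewrite z' mulr0.
    move/maskv_supp: nz => /andP[ib _]; move/maskv_supp: nz' => /andP[_ /s1 ib'].
    by move: ib; rewrite /QB /= ib'.
have oCm2 : dotv C m2 = 0.
  rewrite dotvC; apply: (@ortho_disj _ _ B _ _ _ on2) => // i.
  - by move/maskv_supp => /andP[_ /s2].
  - by move/maskv_supp => /andP[_ /s2].
have cosb : cos (pi / 2 - 100^-1) <= 100^-1 :> R.
  rewrite cosB cos_pihalf sin_pihalf mul0r add0r mul1r.
  by apply: sin_le_x; rewrite invr_ge0.
have normN : forall u : 'rV[R]_d, normv (- u) = normv u.
  by move=> u; rewrite /normv dotvNl dotvNr opprK.
have oAC : `|dotv A C| <= normv A * normv C / 100.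
  have [->|A0] := eqVneq A 0; first by rewrite dotv0l normr0 mulr_ge0 ?mulr_ge0 ?normv_ge0.
  have [->|C0] := eqVneq C 0; first by rewrite dotv0r normr0 mulr_ge0 ?mulr_ge0 ?normv_ge0.
  have spA : span_rows B (fun i : 'I_d => (i < a)%N) A.
    exists (maskv c1 QA); split => // i; rewrite maskvE /QA /= => /negbTE -> //.
  have LC : diffset L2 C.
    rewrite -sp2; exists (maskv c2 (predC QB)); split => // i.
    apply: contraNeq => /maskv_supp /andP[_ /s2] //.
  have [ha _] := andP (ao1 A spA A0).
  have C0' : - C != 0 by rewrite oppr_eq0.
  have g1 := le_trans ha (ap_le A L2 C LC C0).
  have g2 := le_trans ha (ap_le A L2 (- C) (diffsetN _ _ LC) C0').
  have [hp hp'] := @pihalf_facts R.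
  have k1 := acos_ge_cos _ _ (cos_arg_bound A C) hp hp' g1.
  have k2 := acos_ge_cos _ _ (cos_arg_bound A (- C)) hp hp' g2.
  rewrite normN dotvNr in k2.
  have nAC : 0 < normv A * normv C by rewrite mulr_gt0 // normv_gt0.
  have k1' := le_trans k1 cosb; have k2' := le_trans k2 cosb.
  rewrite ler_pdivrMr // in k1'; rewrite ler_pdivrMr // in k2'.
  exact: absb.
set r1 := v - c1 *m B; set r2 := v - c2 *m B.
set sn := sin th.
have {ht1}ht1 : normv r1 <= sn * normv v := ht1.
have {ht2}ht2 : normv r2 <= sn * normv v := ht2.
have ev1 : v = A + m1 + r1 by rewrite /r1 -eA addrC subrK.
have ev2 : v = m2 + C + r2 by rewrite /r2 -eC addrC subrK.
have da1 : dotv A v = dotv A A + dotv A m1 + dotv A r1 by rewrite {1}ev1 !dotvDr.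
have da2 : dotv A v = dotv A m2 + dotv A C + dotv A r2 by rewrite {1}ev2 !dotvDr.
have dc1 : dotv C v = dotv C A + dotv C m1 + dotv C r1 by rewrite {1}ev1 !dotvDr.
have dc2 : dotv C v = dotv C m2 + dotv C C + dotv C r2 by rewrite {1}ev2 !dotvDr.
have cs1 := CS A r1; have cs2 := CS A r2; have cs3 := CS C r1; have cs4 := CS C r2.
have nA0 := normv_ge0 A; have nC0 := normv_ge0 C.
have nr10 := normv_ge0 r1; have nr20 := normv_ge0 r2.
have sqA := normv_sq A; have sqC := normv_sq C.
rewrite (dotvC C A) in dc1.
set nA := normv A in nA0 sqA oAC cs1 cs2 *.
set nC := normv C in nC0 sqC oAC cs3 cs4 *.
set nr1 := normv r1 in nr10 cs1 cs3 ht1 *.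
set nr2 := normv r2 in nr20 cs2 cs4 ht2 *.
have eAA : nA ^+ 2 <= nA * (nC / 100 + (nr1 + nr2)).
  apply: (sq_bound (dotv A A) (dotv A C) (dotv A r1) (dotv A r2)) => //.
  by rewrite oAm1 addr0 in da1; rewrite oAm2 add0r in da2; rewrite -da1 -da2.
have eCC : nC ^+ 2 <= nC * (nA / 100 + (nr1 + nr2)).
  rewrite (addrC nr1 nr2).
  apply: (sq_bound (dotv C C) (dotv A C) (dotv C r2) (dotv C r1)) => //.
  - by rewrite oCm1 addr0 in dc1; rewrite oCm2 add0r in dc2; rewrite -dc1 -dc2.
  - by rewrite [nC * nA]mulrC.
have lA := lin_bound _ _ _ nA0 nC0 (addr_ge0 nr10 nr20) eAA eCC.
have sn0 : 0 <= sn by apply: sin_ge0_pi; rewrite th0 /= (le_trans thpi) // ler_pdivrMr // ler_pMr ?pi_gt0 // ler1n.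
have snth : sn <= th by apply: sin_le_x.
set u := v - m1.
have eu : u = A + r1 by rewrite /u {1}ev1 addrAC addrK.
have nu : normv u <= 31/10 * sn * normv v.
  rewrite eu; apply: le_trans (normvD _ _) _.
  rewrite addrC; exact: (nu_bound _ _ _ _ _ nr10 lA ht1 ht2).
set nv' := normv v in nv nu ht1 ht2 *.
have T1 := T_lt1 _ _ sn0 snth thq.
have m10 : m1 != 0.
  apply/eqP => m0; move: nu; rewrite /u m0 subr0 -/nv'; exact: not_small.
have nm := normv_gt0 m1 m10.
have cs5 := CS v u.
have dvm : dotv v m1 = nv' ^+ 2 - dotv v u.
  rewrite /u dotvBr /nv' normv_sq; ring.
have evm : v = m1 + u by rewrite /u addrC subrK.
have gram : nv' ^+ 2 * normv m1 ^+ 2 - dotv v m1 ^+ 2 = normv m1 ^+ 2 * normv u ^+ 2 - dotv m1 u ^+ 2.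
  have := gram_id m1 u; rewrite -evm (dotvC v m1) /nv' !normv_sq => ->.
  by [].
have cs7 := CS1 v m1.
have nu0 := normv_ge0 u.
set T := 31/10 * sn in T1 nu *.
have T0 : 0 <= T by rewrite mulr_ge0.
have Dp : 0 < dotv v m1.
  rewrite dvm; apply: (Dpos _ _ _ _ nv T0 T1 nu); exact: le_trans (ler_norm _) cs5.
have h3 := gram_bound _ _ _ _ _ _ (ltW nv) nu0 T0 gram nu.
have zb := key_bound _ _ _ (mulr_gt0 nv nm) Dp cs7 h3.
have c8 := final_cmp _ _ _ (cos8_bound _ th0 thq) (erefl T).
have ang : vangle v m1 <= ((th *+ 2) *+ 2) *+ 2.
  apply: acos_le_of_cos; rewrite ?cos_arg_bound //.
  exact: le_trans c8 zb.
have m1L1 : diffset L1 m1.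
  rewrite -sp1; exists (maskv c1 (predC QA)); split => // i.
  apply: contraNeq => /maskv_supp /andP[_ /s1] //.
have m1L2 : diffset L2 m1.
  rewrite -sp2; exists (maskv c1 (predC QA)); split => // i.
  apply: contraNeq => /maskv_supp /andP[ia /s1 ib]; rewrite /QA /= -leqNgt in ia.
  by rewrite ia /= (leq_trans ib bc).
have := ap_le v (L1 `&` L2) m1 (diffset_cap _ _ _ _ P1 P2 Hq m1L1 m1L2) m10.
move=> h; apply: (le_trans h); exact: (le_trans ang).
Qed.
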